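(* Let $H \le G$ be finite groups such that the interval $[H,G]$ is a distributive lattice. Then there exists an irreducible complex representation $V$ of $G$ such that $G_{(V^H)} = H$.
   Context: For subgroups $H \le G$, the interval $[H,G]$ is the set of subgroups $K$ with $H \le K \le G$, ordered by inclusion; it is a lattice with meet $K_1 \wedge K_2 = K_1 \cap K_2$ and join $K_1 \vee K_2 = \langle K_1, K_2\rangle$. For a representation $W$ of a group $G$, a subgroup $K \le G$ and a subspace $X \subseteq W$: the fixed-point subspace is $W^K = \{w \in W : kw = w \ \forall k \in K\}$, and the pointwise stabilizer is $G_{(X)} = \{g \in G : gx = x \ \forall x \in X\}$. *)

(* Defs.v *)
From HB Require Import structures.
From mathcomp Require Import all_boot all_order all_algebra all_fingroup all_solvable all_field all_character.
Set Implicit Arguments. Unset Strict Implicit. Unset Printing Implicit Defensive.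

Local Open Scope group_scope.

(* The interval [H, G] of subgroups is a distributive lattice:
   meet = intersection, join = generated subgroup (K1 <*> K2).
   A lattice is distributive iff meet distributes over join. *)
Definition interval_distributive (gT : finGroupType) (H G : {group gT}) : Prop :=
  forall K1 K2 K3 : {group gT},
    H \subset K1 -> K1 \subset G ->
    H \subset K2 -> K2 \subset G ->
    H \subset K3 -> K3 \subset G ->
    K1 :&: (K2 <*> K3) = (K1 :&: K2) <*> (K1 :&: K3).

(* Main.v *)
Require Import Defs.
From HB Require Import structures.
From mathcomp Require Import all_boot all_order all_algebra all_fingroup all_solvable all_field all_character.
Set Implicit Arguments. Unset Strict Implicit. Unset Printing Implicit Defensive.
Import GRing.Theory Num.Theory Order.TTheory.
Local Open Scope ring_scope.

Definition Pavg (gT : finGroupType) (G : {group gT}) n (rG : mx_representation algC G n) (L : {group gT}) : 'M[algC]_n :=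
  #|L|%:R^-1 *: \sum_(x in L) rG x.

Lemma Pavg_fix (gT : finGroupType) (G L : {group gT}) n (rG : mx_representation algC G n) m (W : 'M_(m, n)) :
  (forall x, x \in L -> W *m rG x = W) -> W *m Pavg rG L = W.
Proof.
move=> fixW; rewrite /Pavg -scalemxAr mulmx_sumr (eq_bigr (fun _ => W)) //.
by rewrite sumr_const -scaler_nat scalerA mulVf ?neq0CG // scale1r.
Qed.

Lemma Pavg_right (gT : finGroupType) (G L : {group gT}) n (rG : mx_representation algC G n) y :
  L \subset G -> y \in L -> Pavg rG L *m rG y = Pavg rG L.
Proof.
move=> sLG Ly; rewrite /Pavg -scalemxAl mulmx_suml; congr (_ *: _).
rewrite (reindex (mulg^~ y^-1)%g) /=; last by exists (mulg^~ y)%g => z _; rewrite ?mulgKV ?mulgK.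
apply: eq_big => [x | x Lx]; first by rewrite groupMr ?groupV.
by rewrite -repr_mxM ?(subsetP sLG) // mulgKV.
Qed.

Lemma Pavg_tr (gT : finGroupType) (G L : {group gT}) n (rG : mx_representation algC G n) :
  L \subset G -> '['Res[L] (cfRepr rG), 1] = \tr (Pavg rG L).
Proof.
move=> sLG; rewrite cfdotE /Pavg mxtraceZ raddf_sum /=; congr (_ * _).
apply: eq_bigr => x Lx; rewrite cfResE // cfun1E Lx conjC1 mulr1 cfunE.
by rewrite (subsetP sLG).
Qed.

Lemma bridge (gT : finGroupType) (G H : {group gT}) n (rG : mx_representation algC G n) :
  H \subset G ->
  (forall K : {group gT}, H \proper K -> K \subset G ->
     '['Res[K] (cfRepr rG), 1] < '['Res[H] (cfRepr rG), 1]) ->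
  rstab rG (rfix_mx rG H) = H.
Proof.
move=> sHG prop; set K := rstab_group rG (rfix_mx rG H).
have sHK : H \subset K by rewrite /= rfix_mx_rstabC.
have sKG : K \subset G by exact: rstab_sub.
apply/eqP; rewrite eqEsubset sHK andbT; apply/negPn/negP => nKH.
have pHK : H \proper K by rewrite properE sHK.
have := prop K pHK sKG; rewrite !Pavg_tr //.
have e1 : Pavg rG K *m Pavg rG H = Pavg rG K.
  by apply: Pavg_fix => x Hx; rewrite Pavg_right // (subsetP sHK).
have sPH : (Pavg rG H <= rfix_mx rG H)%MS by apply/rfix_mxP => x Hx; rewrite Pavg_right.
have sHfK : (rfix_mx rG H <= rfix_mx rG K)%MS by rewrite -rfix_mx_rstabC.
have e2 : Pavg rG H *m Pavg rG K = Pavg rG H.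
  apply: Pavg_fix => x Kx; exact: (rfix_mxP K (submx_trans sPH sHfK)) x Kx.
by rewrite -e1 mxtrace_mulC e2 ltxx.
Qed.

Lemma res_mono (gT : finGroupType) (G H K : {group gT}) (psi : 'CF(G)) :
  psi \is a character -> H \subset K -> K \subset G ->
  '['Res[K] psi, 1] <= '['Res[H] psi, 1].
Proof.
move=> Npsi sHK sKG; have sHG := subset_trans sHK sKG.
rewrite !cfdot_Res_l -(cfIndInd _ sKG sHK).
have N1 : 'Ind[K] (1 : 'CF(H)) \is a character by rewrite cfInd_char ?cfun1_char.
have c0 : 0 \in irr_constt ('Ind[K] (1 : 'CF(H))).
  by rewrite irr_consttE irr0 -Frobenius_reciprocity cfRes_cfun1 cfnorm1 oner_eq0.
have [chi' Nchi' ->] := constt_charP _ N1 c0.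
rewrite irr0 linearD /= cfdotDr lerDl natr_ge0 //.
by rewrite Cnat_cfdot_char ?cfInd_char.
Qed.

Lemma resZ (gT : finGroupType) (G L : {group gT}) (a : algC) (f : 'CF(G)) : 'Res[L] (a *: f) = a *: 'Res[L] f.
Proof. by rewrite linearZ. Qed.

Lemma res_expand (gT : finGroupType) (G L : {group gT}) (phi : 'CF(G)) :
  '['Res[L] phi, 1] = \sum_j '[phi, 'chi_j] * '['Res[L] 'chi_j, 1].
Proof.
rewrite {1}[phi]cfun_sum_cfdot linear_sum cfdot_suml; apply: eq_bigr => j _.
by rewrite linearZ cfdotZl.
Qed.

Lemma constt_lt (gT : finGroupType) (G L1 L2 : {group gT}) (phi : 'CF(G)) j :
  phi \is a character -> L1 \subset L2 -> L2 \subset G ->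
  '[phi, 'chi_j] != 0 -> '['Res[L2] 'chi_j, 1] < '['Res[L1] 'chi_j, 1] ->
  '['Res[L2] phi, 1] < '['Res[L1] phi, 1].
Proof.
move=> Nphi s12 s2G nz lt; rewrite !res_expand (bigD1 j) //= [X in _ < X](bigD1 j) //=.
have c0 k : 0 <= '[phi, 'chi_k] by rewrite natr_ge0 ?Cnat_cfdot_char_irr.
apply: ltr_leD.
  by rewrite ltr_pM2l // lt_def nz c0.
apply: ler_sum => k _; apply: ler_wpM2l => //.
exact: res_mono (irr_char k) s12 s2G.
Qed.

Lemma exists_constt (gT : finGroupType) (G L1 L2 : {group gT}) (phi : 'CF(G)) :
  phi \is a character -> L1 \subset L2 -> L2 \subset G ->
  '['Res[L2] phi, 1] < '['Res[L1] phi, 1] ->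
  exists j, '[phi, 'chi_j] != 0 /\ '['Res[L2] 'chi_j, 1] < '['Res[L1] 'chi_j, 1].
Proof.
move=> Nphi s12 s2G lt.
case: (boolP [exists j, ('[phi, 'chi_j] != 0) && ('['Res[L2] 'chi_j, 1] < '['Res[L1] 'chi_j, 1])]).
  by case/existsP => j /andP[a b]; exists j.
move/existsPn => nH; move: lt; rewrite !res_expand.
rewrite (eq_bigr (fun j => '[phi, 'chi_j] * '['Res[L1] 'chi_j, 1])) ?ltxx //.
move=> j _; have := nH j; rewrite negb_and negbK.
case/orP => [/eqP-> | nlt]; first by rewrite !mul0r.
have := res_mono (irr_char j) s12 s2G; rewrite le_eqVlt (negbTE nlt) orbF.
by move/eqP ->.
Qed.

Lemma res1_sum (gT : finGroupType) (M B : {group gT}) (theta : 'CF(M)) :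
  B \subset M -> '['Res[B] theta, 1] = #|B|%:R^-1 * \sum_(z in B) theta z.
Proof.
move=> sBM; rewrite cfdotE; congr (_ * _); apply: eq_bigr => z Bz.
by rewrite cfResE // cfun1E Bz conjC1 mulr1.
Qed.

Lemma T_eq (gT : finGroupType) (M L : {group gT}) (theta : 'CF(M)) y :
  \sum_(x in L) theta (x ^ y)%g =
  #|(L :^ y :&: M)%G|%:R * '['Res[(L :^ y :&: M)%G] theta, 1].
Proof.
rewrite res1_sum ?subsetIr // mulVKf ?neq0CG //.
rewrite (reindex (conjg^~ y^-1)%g) /=; last first.
  by exists (conjg^~ y)%g => z _; rewrite ?conjgKV ?conjgK.
rewrite (eq_bigl (fun z => z \in (L :^ y)%g)) => [|z]; last by rewrite mem_conjg.
under eq_bigr => z _ do rewrite conjgKV.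
rewrite [LHS](big_setID M) /= [X in _ + X]big1 ?addr0 // => z.
by rewrite inE => /andP[nMz _]; apply: cfun0.
Qed.

Lemma card_ineq (gT : finGroupType) (H1 A1 M : {group gT}) :
  H1 \subset A1 -> (#|A1 :&: M| * #|H1| <= #|A1| * #|H1 :&: M|)%N.
Proof.
move=> sHA; rewrite mul_cardG; apply: leq_mul.
  by apply: subset_leq_card; rewrite mul_subG ?subsetIl.
by rewrite setIAC [A1 :&: H1]setIC (setIidPl sHA).
Qed.

Lemma ind_formula (gT : finGroupType) (G M L : {group gT}) (theta : 'CF(M)) :
  M \subset G -> L \subset G ->
  '['Res[L] ('Ind[G] theta), 1] =
  #|M|%:R^-1 * \sum_(y in G) (#|L|%:R^-1 * \sum_(x in L) theta (x ^ y)%g).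
Proof.
move=> sMG sLG; rewrite res1_sum //.
under eq_bigr => x Lx do rewrite cfIndE //.
by rewrite -mulr_sumr exchange_big /= -mulr_sumr mulrCA.
Qed.

Lemma ind_strict (gT : finGroupType) (G M H A : {group gT}) (theta : 'CF(M)) :
  theta \is a character -> H \subset M -> M \subset G -> A \subset G ->
  A :&: M = H -> H \proper A -> 0 < '['Res[H] theta, 1] ->
  '['Res[A] ('Ind[G] theta), 1] < '['Res[H] ('Ind[G] theta), 1].
Proof.
move=> Nth sHM sMG sAG AM pHA d0; have sHA := proper_sub pHA.
rewrite !ind_formula ?(subset_trans sHM) //.
rewrite ltr_pM2l ?invr_gt0 ?gt0CG //.
rewrite (bigD1 1%g) // [X in _ < X](bigD1 1%g) //=.
apply: ltr_leD.
  rewrite !T_eq.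
  have e1 : (A :^ 1 :&: M)%G = H :> {group gT} by apply/val_inj; rewrite /= conjsg1 AM.
  have e2 : (H :^ 1 :&: M)%G = H :> {group gT} by apply/val_inj; rewrite /= conjsg1 (setIidPl sHM).
  rewrite e1 e2 mulKf ?neq0CG // mulrA gtr_pMl //.
  by rewrite mulrC ltr_pdivrMr ?gt0CG // mul1r ltr_nat proper_card.
apply: ler_sum => y /andP[Gy _]; rewrite !T_eq (mulrA #|A|%:R^-1) (mulrA #|H|%:R^-1).
have c0 (B : {group gT}) : 0 <= '['Res[B] theta, 1].
  by rewrite natr_ge0 // Cnat_cfdot_char ?cfRes_char ?cfun1_char.
apply: ler_pM => //.
  by rewrite mulr_ge0 ?invr_ge0 ?ler0n.
  rewrite mulrC [X in _ <= X]mulrC ler_pdivrMr ?gt0CG // mulrAC ler_pdivlMr ?gt0CG //.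
  rewrite -!natrM ler_nat /= -(cardJg A y) -(cardJg H y) mulnC.
  rewrite mulnC [X in (_ <= X)%N]mulnC.
  have h : (H :^ y)%G \subset (A :^ y)%G by rewrite conjSg.
  exact: (card_ineq M h).
apply: res_mono => //=; last exact: subsetIr.
by rewrite setSI // conjSg.
Qed.

Definition good (gT : finGroupType) (G H : {group gT}) (chi : 'CF(G)) :=
  0 < '['Res[H] chi, 1] /\
  forall K : {group gT}, H \proper K -> K \subset G ->
    '['Res[K] chi, 1] < '['Res[H] chi, 1].

Lemma main_ind (gT : finGroupType) n : forall (G H : {group gT}),
  (#|G| <= n)%N -> H \subset G -> interval_distributive H G ->
  exists i : Iirr G, good H 'chi_i.
Proof.
elim: n => [|n IH] G H.
  by rewrite leqn0 => /eqP G0; have := cardG_gt0 G; rewrite G0.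
move=> leG sHG dist.
case: (boolP (H \proper G)) => [pHG | npHG]; last first.
  have eGH : G :=: H.
    by apply/eqP; rewrite eqEsubset sHG andbT; move: npHG; rewrite properE sHG /= negbK.
  exists 0; split; first by rewrite irr0 cfRes_cfun1 cfnorm1 ltr01.
  move=> K pHK sKG; have := proper_sub_trans pHK sKG.
  by rewrite eGH properxx.
pose PA := fun X : {group gT} => (H \proper X) && (X \subset G).
have PAG : PA G by rewrite /PA pHG subxx.
have [A minA _] := @mingroup_exists _ PA G PAG.
case/mingroupP: minA => /andP[pHA sAG] minA.
have sHA := proper_sub pHA.
pose PM := fun X : {group gT} => [&& H \subset X, X \subset G & X :&: A == H].
have PMH : PM H by rewrite /PM subxx sHG (setIidPl sHA) eqxx.
have [M maxM sHM] := @maxgroup_exists _ PM H PMH.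
case/maxgroupP: maxM => /and3P[_ sMG /eqP MA] maxM.
have pMG : M \proper G.
  rewrite properE sMG /=; apply/negP => sGM.
  move: MA; rewrite (setIidPr (subset_trans sAG sGM)) => eAH.
  by move: pHA; rewrite eAH properxx.
have leM : (#|M| <= n)%N by rewrite -ltnS (leq_trans (proper_card pMG)).
have distM : interval_distributive H M.
  move=> K1 K2 K3 h1 s1 h2 s2 h3 s3; apply: dist => //; exact: subset_trans sMG.
have [j [d0 gj]] := IH M H leM sHM distM.
have AM : A :&: M = H by rewrite setIC.
have lt1 := ind_strict (irr_char j) sHM sMG sAG AM pHA d0.
have [i [nz lti]] := exists_constt (cfInd_char G (irr_char j)) sHA sAG lt1.
exists i; split.
  apply: le_lt_trans lti.
  by rewrite natr_ge0 // Cnat_cfdot_char ?cfRes_char ?irr_char ?cfun1_char.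
move=> K pHK sKG; have sHK := proper_sub pHK.
case: (boolP (K :&: M == H)) => [/eqP KM | nKM].
  have sAK : A \subset K.
    apply/negPn/negP => nAK.
    have sHKA : H \subset K :&: A by rewrite subsetI sHK sHA.
    have KA : K :&: A = H.
      apply/eqP; rewrite eqEsubset sHKA andbT.
      apply/negPn/negP => nsub.
      have pH : PA (K :&: A)%G by rewrite /PA properE sHKA nsub /= (subset_trans (subsetIr _ _) sAG).
      have := minA (K :&: A)%G pH (subsetIr _ _) => /= eKA.
      by move: nAK; rewrite -eKA subsetIl.
    have PMK : PM (M <*> K)%G.
      rewrite /PM /= (subset_trans sHM (joing_subl _ _)) join_subG sMG sKG /=.
      rewrite setIC (dist A M K sHA sAG sHM sMG sHK sKG).
      by rewrite AM (setIC A K) KA /joing setUid genGid.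
    have := maxM (M <*> K)%G PMK (joing_subl _ _) => /= eMK.
    have sKM : K \subset M by rewrite -eMK joing_subr.
    by move: pHK; rewrite -KM (setIidPl sKM) properxx.
  exact: le_lt_trans (res_mono (irr_char i) sAK sKG) lti.
have sLM : K :&: M \subset M by exact: subsetIr.
have pHL : H \proper (K :&: M)%G by rewrite properEneq eq_sym nKM subsetI sHK sHM.
have := gj (K :&: M)%G pHL sLM => ltj.
have nz' : '['Res[M] 'chi_i, 'chi_j] != 0.
  by rewrite cfdot_Res_l cfdotC conjC_eq0.
have := constt_lt (cfRes_char M (irr_char i)) (proper_sub pHL) sLM nz' ltj.
rewrite !cfResRes // => lt2.
apply: le_lt_trans lt2; apply: res_mono (irr_char i) _ sKG.
exact: subsetIl.
Qed.

Local Close Scope ring_scope.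

Theorem theorem1p2 (gT : finGroupType) (G H : {group gT}) :
  H \subset G -> interval_distributive H G ->
  exists (n : nat) (rG : mx_representation algC G n),
    mx_irreducible rG /\ rstab rG (rfix_mx rG H) = H.
Proof.
move=> sHG dist; have [i [_ gi]] := @main_ind gT #|G| G H (leqnn _) sHG dist.
exists _, 'Chi_i; split; first exact: socle_irr.
apply: bridge sHG _ => K pHK sKG; rewrite irrRepr; exact: gi.
Qed.
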